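(* Let $\phi,\alpha\in[0,\pi/2]$, $\beta\in[0,2\pi]$, and let $|\psi_1\rangle=\frac{1}{\sqrt2}(|00\rangle+|11\rangle)$ and $|\psi_2\rangle=\cos\phi(\cos\alpha|01\rangle+\sin\alpha|10\rangle)+e^{i\beta}\frac{\sin\phi}{\sqrt2}(|00\rangle-|11\rangle)$. Then there exist single-qubit unitaries $\mathcal V_a,\mathcal V_b$, a real phase $\zeta$ and an angle $\theta'\in[0,\pi/2]$ such that $(\mathcal V_a\otimes\mathcal V_b)|\psi_1\rangle=\frac{1}{\sqrt2}(|01\rangle+|10\rangle)$ and $(\mathcal V_a\otimes\mathcal V_b)|\psi_2\rangle=e^{i\zeta}(\cos\theta'|00\rangle+\sin\theta'|11\rangle)$, where $\sin2\theta'=\left|e^{2i\beta}\sin^2\phi+\cos^2\phi\sin2\alpha\right|$. Consequently, for any $\nu_1,\nu_2\in[0,1]$ with $\nu_1+\nu_2=1$, the state $\nu_1|\psi_1\rangle\langle\psi_1|+\nu_2|\psi_2\rangle\langle\psi_2|$ is locally unitarily equivalent to $\nu_2|\psi_1'\rangle\langle\psi_1'|+\nu_1|\psi_2'\rangle\langle\psi_2'|$ with $|\psi_1'\rangle=\cos\theta'|00\rangle+\sin\theta'|11\rangle$ and $|\psi_2'\rangle=\frac1{\sqrt2}(|01\rangle+|10\rangle)$.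
   Context: Qubits are labelled so that the first tensor factor belongs to Alice and the second to Bob; $\{|0\rangle,|1\rangle\}$ is the computational basis and $|ij\rangle=|i\rangle\otimes|j\rangle$. *)

(* Defs.v *)
(* R : realType (MathComp-Analysis trigo for sin/cos/pi),
   complex numbers C = R[i] (mathcomp-real-closed), Kronecker product of
   matrices *t (mathcomp-real-closed mxtens, index (i,j) |-> i*n + j, so the
   first tensor factor (Alice) is the most significant one). *)
From HB Require Import structures.
From mathcomp Require Import all_boot all_order all_algebra.
From mathcomp Require Import reals trigo.
From mathcomp Require Import complex mxtens.
Set Implicit Arguments. Unset Strict Implicit. Unset Printing Implicit Defensive.
Import Order.TTheory GRing.Theory Num.Theory.
Local Open Scope ring_scope.
Local Open Scope complex_scope.

Section Qubits.
Variable R : realType.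
Local Notation C := (R[i]).

Definition rc (x : R) : C := x%:C.

Definition expi (x : R) : C := (cos x) +i* (sin x).

Definition adj {m n} (A : 'M[C]_(m, n)) : 'M[C]_(n, m) := map_mx Num.conj (A^T).

Definition unitary {n} (U : 'M[C]_n) : Prop := U *m adj U = 1%:M.

Definition ket (b : 'I_2) : 'cV[C]_2 := delta_mx b 0.

Definition ket2 (i j : 'I_2) : 'M[C]_(2 * 2, 1 * 1) := ket i *t ket j.

Definition proj {n m} (v : 'M[C]_(n, m)) : 'M[C]_n := v *m adj v.

Definition LU_equiv (rho sigma : 'M[C]_(2 * 2)) : Prop :=
  exists Ua Ub : 'M[C]_2, unitary Ua /\ unitary Ub /\
    (Ua *t Ub) *m rho *m adj (Ua *t Ub) = sigma.
End Qubits.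

(* Main.v *)
Require Import Defs.
From HB Require Import structures.
From mathcomp Require Import all_boot all_order all_algebra.
From mathcomp Require Import reals trigo.
From mathcomp Require Import complex mxtens.
From mathcomp Require Import ring.
Set Implicit Arguments. Unset Strict Implicit. Unset Printing Implicit Defensive.
Import Order.TTheory GRing.Theory Num.Theory.
Local Open Scope ring_scope.
Local Open Scope complex_scope.

From mathcomp Require Import zify lra.
Section Aux.
Variable R : realType.
Local Notation C := (R[i]).

Definition vec (M : 'M[C]_2) : 'M[C]_(2 * 2, 1 * 1) :=
  \matrix_(k, l) M (mxtens_unindex k).1 (mxtens_unindex k).2.

Lemma ket2_vec i j : ket2 R i j = vec (delta_mx i j).
Proof.
apply/matrixP => k l; rewrite !mxE.
rewrite !(ord1 (mxtens_unindex l).1) !(ord1 (mxtens_unindex l).2) !eqxx !andbT.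
by case: (_ == i); case: (_ == j); rewrite ?mul1r ?mul0r.
Qed.

Lemma vecD A B : vec (A + B) = vec A + vec B.
Proof. by apply/matrixP => k l; rewrite !mxE. Qed.
Lemma vecZ c A : vec (c *: A) = c *: vec A.
Proof. by apply/matrixP => k l; rewrite !mxE. Qed.
Lemma vecN A : vec (- A) = - vec A.
Proof. by apply/matrixP => k l; rewrite !mxE. Qed.

Lemma sum2 (F : 'I_2 -> C) : \sum_(i < 2) F i = F 0 + F 1.
Proof. by rewrite big_ord_recl big_ord1; congr (_ + F _); apply: val_inj. Qed.

Lemma tens_vec (A B M : 'M[C]_2) : (A *t B) *m vec M = vec (A *m M *m B^T).
Proof.
apply/matrixP => k l; case: (mxtens_indexP k) => i j.
rewrite [in RHS]mxE mxtens_indexK /= !mxE (reindex (@mxtens_index 2 2)); last first.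
  by exists (@mxtens_unindex 2 2) => x _; rewrite (mxtens_indexK, mxtens_unindexK).
transitivity (\sum_(a < 2) \sum_(b < 2) (A *t B) (mxtens_index (i, j)) (mxtens_index (a,b)) * vec M (mxtens_index (a, b)) l).
  by rewrite pair_bigA; apply: eq_bigr => -[a b].
rewrite !sum2 !tensmxE /vec !mxE !mxtens_indexK /= !sum2.
ring.
Qed.


Lemma kernel3 (A : 'M[R]_(3,2)) : exists2 u : 'rV[R]_3, u != 0 & u *m A = 0.
Proof.
have hK : kermx A != 0.
  rewrite -mxrank_eq0 mxrank_ker; have := rank_leq_col A; lia.
have [i hi] : exists i, row i (kermx A) != 0.
  apply/existsP; apply: contraR hK => /existsPn h.
  by apply/eqP/row_matrixP => i; rewrite row0; apply/eqP; move/negPn: (h i).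
by exists (row i (kermx A)) => //; rewrite -row_mul mulmx_ker row0.
Qed.

Lemma sum3 (F : 'I_3 -> R) : \sum_(i < 3) F i = F 0 + F 1 + F 2.
Proof.
rewrite !big_ord_recr big_ord0 /= add0r; congr (F _ + F _ + F _); exact: val_inj.
Qed.

Lemma conjE (x : C) : Num.conj x = conjc x.
Proof. by []. Qed.


Lemma ord3P (k : 'I_3) : k = 0 \/ k = 1 \/ k = 2.
Proof. by case: k => -[|[|[|//]]] ?; [left|right;left|right;right]; exact: val_inj. Qed.

Lemma ord2P (k : 'I_2) : k = 0 \/ k = 1.
Proof. by case: k => -[|[|//]] ?; [left|right]; exact: val_inj. Qed.

Lemma sqr_pos (x : R) : x != 0 -> 0 < x ^+ 2.
Proof. by move=> h; rewrite exprn_even_gt0 //= h. Qed.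

Lemma L1a (c1 c2 c3 d1 d2 d3 : R) : exists t1 t2 t3 : R,
  [/\ 0 <= t3, 0 < t1 ^+ 2 + t2 ^+ 2 + t3 ^+ 2,
      c1 * t1 + c2 * t2 + c3 * t3 = 0 & d1 * t1 + d2 * t2 + d3 * t3 = 0].
Proof.
pose A : 'M[R]_(3,2) := \matrix_(i, j) (if j == 0 then [:: c1; c2; c3]`_i else [:: d1; d2; d3]`_i).
have [u u0 hu] := kernel3 A.
have e0 : (u *m A) 0 0 = 0 by rewrite hu mxE.
have e1 : (u *m A) 0 1 = 0 by rewrite hu mxE.
rewrite !mxE sum3 !mxE /= in e0; rewrite !mxE sum3 !mxE /= in e1.
have hpos : 0 < u 0 0 ^+ 2 + u 0 1 ^+ 2 + u 0 2 ^+ 2.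
  have h0 := sqr_ge0 (u 0 0); have h1 := sqr_ge0 (u 0 1); have h2 := sqr_ge0 (u 0 2).
  have [k hk] : exists k, u 0 k != 0.
    apply/existsP; apply: contraR u0 => /existsPn h.
    by apply/eqP/rowP => k; rewrite mxE; apply/eqP; move/negPn: (h k).
  have := sqr_pos hk.
  by case: (ord3P k) => [->|[->|->]]; lra.
have [hs|hs] := leP 0 (u 0 2).
  exists (u 0 0), (u 0 1), (u 0 2); split => //.
    by rewrite mulrC [c2 * _]mulrC [c3 * _]mulrC.
  by rewrite mulrC [d2 * _]mulrC [d3 * _]mulrC.
exists (- u 0 0), (- u 0 1), (- u 0 2); split.
- lra.
- by rewrite !sqrrN.
- by transitivity (- (u 0 0 * c1 + u 0 1 * c2 + u 0 2 * c3)); [ring | rewrite e0 oppr0].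
- by transitivity (- (u 0 0 * d1 + u 0 1 * d2 + u 0 2 * d3)); [ring | rewrite e1 oppr0].
Qed.

Lemma two_neq0 : (2%:R : C) != 0.
Proof. by rewrite pnatr_eq0. Qed.

Lemma alg1 (r t x z zc : C) : r != 0 -> x != 0 -> r + t != 0 ->
  x ^+ 2 = (r + t) / (2%:R * r) -> z * zc = r ^+ 2 - t ^+ 2 ->
  x * x + (z / (2%:R * r * x)) * (zc / (2%:R * r * x)) = 1.
Proof.
move=> hr hx hrt hx2 hw.
have -> : (z / (2%:R * r * x)) * (zc / (2%:R * r * x)) = (z * zc) / (2%:R * r * x) ^+ 2.
  by field; rewrite hr hx.
have -> : x * x = x ^+ 2 by rewrite expr2.
rewrite hw exprMn exprMn hx2.
by field; rewrite hr hrt.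
Qed.

Lemma alg2 (a p q r t x z zc : C) : r != 0 -> x != 0 -> r + t != 0 ->
  x ^+ 2 = (r + t) / (2%:R * r) -> z * zc = r ^+ 2 - t ^+ 2 ->
  2%:R * a * t + z * p + zc * q = 0 ->
  a * (x * x - (z / (2%:R * r * x)) * (zc / (2%:R * r * x)))
   + x * (z / (2%:R * r * x)) * p + x * (zc / (2%:R * r * x)) * q = 0.
Proof.
move=> hr hx hrt hx2 hw hE.
have -> : (z / (2%:R * r * x)) * (zc / (2%:R * r * x)) = (z * zc) / (2%:R * r * x) ^+ 2.
  by field; rewrite hr hx.
have -> : x * x = x ^+ 2 by rewrite expr2.
rewrite hw exprMn exprMn hx2.
transitivity ((2%:R * a * t + z * p + zc * q) / (2%:R * r)).
  by field; rewrite hr hx hrt.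
by rewrite hE mul0r.
Qed.

Lemma cjM (x y : C) : conjc (x * y) = conjc x * conjc y. Proof. exact: rmorphM. Qed.
Lemma cjD (x y : C) : conjc (x + y) = conjc x + conjc y. Proof. exact: rmorphD. Qed.
Lemma cjB (x y : C) : conjc (x - y) = conjc x - conjc y. Proof. exact: rmorphB. Qed.
Lemma cjN (x : C) : conjc (- x) = - conjc x. Proof. exact: rmorphN. Qed.
Lemma cjV (x : C) : conjc (x^-1) = (conjc x)^-1. Proof. exact: fmorphV. Qed.
Lemma cj_div (x y : C) : conjc (x / y) = conjc x / conjc y. Proof. exact: fmorph_div. Qed.
Lemma cj_nat n : conjc (n%:R : C) = n%:R. Proof. exact: rmorph_nat. Qed.
Lemma cjX (x : C) n : conjc (x ^+ n) = conjc x ^+ n. Proof. exact: rmorphXn. Qed.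
Lemma cj1 : conjc (1 : C) = 1. Proof. exact: rmorph1. Qed.
Lemma cj0 : conjc (0 : C) = 0. Proof. exact: rmorph0. Qed.

Lemma rcD (a b : R) : (a + b)%:C = a%:C + b%:C :> C. Proof. exact: rmorphD. Qed.
Lemma rcB (a b : R) : (a - b)%:C = a%:C - b%:C :> C. Proof. exact: rmorphB. Qed.
Lemma rcN (a : R) : (- a)%:C = - a%:C :> C. Proof. exact: rmorphN. Qed.
Lemma rcM (a b : R) : (a * b)%:C = a%:C * b%:C :> C. Proof. exact: rmorphM. Qed.
Lemma rcX (a : R) n : (a ^+ n)%:C = a%:C ^+ n :> C. Proof. exact: rmorphXn. Qed.
Lemma rcV (a : R) : (a^-1)%:C = a%:C^-1 :> C. Proof. exact: fmorphV. Qed.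
Lemma rc_div (a b : R) : (a / b)%:C = a%:C / b%:C :> C. Proof. exact: fmorph_div. Qed.
Lemma rc_nat n : (n%:R : R)%:C = n%:R :> C. Proof. exact: rmorph_nat. Qed.
Lemma rc1 : (1 : R)%:C = 1 :> C. Proof. exact: rmorph1. Qed.
Lemma rc0 : (0 : R)%:C = 0 :> C. Proof. exact: rmorph0. Qed.

Lemma rc_neq0 (x : R) : x != 0 -> x%:C != 0 :> C.
Proof. by move=> h; rewrite eq_complex /= negb_and h. Qed.

Lemma L1 (a p q : C) : exists x y : C,
  x * conjc x + y * conjc y = 1 /\
  a * (x * conjc x - y * conjc y) + conjc x * y * p + x * conjc y * q = 0.
Proof.
case: a => a1 a2; case: p => p1 p2; case: q => q1 q2.
have [t1 [t2 [t3 [ht3 hpos e1 e2]]]] :=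
  L1a (p1 + q1) (q2 - p2) (2 * a1) (p2 + q2) (p1 - q1) (2 * a2).
have hE : 2%:R * (a1 +i* a2) * t3%:C + (t1 +i* t2) * (p1 +i* p2)
    + conjc (t1 +i* t2) * (q1 +i* q2) = 0.
  rewrite /= -complexr0.
  simpc; apply/eqP; rewrite eq_complex /=; apply/andP; split; apply/eqP.
    by apply: (eq_trans _ e1); ring.
  by apply: (eq_trans _ e2); ring.
set S := t1 ^+ 2 + t2 ^+ 2 + t3 ^+ 2.
set rho := Num.sqrt S.
have hrho : 0 < rho by rewrite sqrtr_gt0.
have hrho2 : rho ^+ 2 = S by rewrite sqr_sqrtr // ltW.
set K := (rho + t3) / (2 * rho).
have hK : 0 < K by apply: divr_gt0; lra.
set X := Num.sqrt K.
have hX : 0 < X by rewrite sqrtr_gt0.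
have hX2 : X ^+ 2 = K by rewrite sqr_sqrtr // ltW.
have hr : rho%:C != 0 by rewrite rc_neq0 // gt_eqF.
have hx : X%:C != 0 by rewrite rc_neq0 // gt_eqF.
have hrt : rho%:C + t3%:C != 0 by rewrite -rmorphD rc_neq0 // gt_eqF //; lra.
have hx2 : X%:C ^+ 2 = (rho%:C + t3%:C) / (2%:R * rho%:C).
  by rewrite -rmorphXn hX2 /K fmorph_div rmorphD rmorphM rmorph_nat.
have hw : (t1 +i* t2) * conjc (t1 +i* t2) = rho%:C ^+ 2 - t3%:C ^+ 2.
  rewrite -!rmorphXn -rmorphB hrho2 /S /=; simpc.
  apply/eqP; rewrite eq_complex /=; apply/andP; split; apply/eqP; ring.
have hcd : conjc (2%:R * rho%:C * X%:C) = 2%:R * rho%:C * X%:C.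
  by rewrite !cjM cj_nat !conjc_real.
exists X%:C, ((t1 +i* t2) / (2%:R * rho%:C * X%:C)).
rewrite cj_div hcd conjc_real; split.
  exact: (alg1 hr hx hrt hx2 hw).
exact: (alg2 hr hx hrt hx2 hw hE).
Qed.

Definition nc (z : C) : R := Num.sqrt (complex.Re z ^+ 2 + complex.Im z ^+ 2).

Lemma normc_C (z : C) : `|z| = (nc z)%:C.
Proof. exact: normc_def. Qed.

Lemma normc_ge0 (z : C) : 0 <= nc z.
Proof. exact: sqrtr_ge0. Qed.

Lemma cj_norm (z : C) : conjc `|z| = `|z|. Proof. exact: conj_normC. Qed.
Lemma normCK' (z : C) : `|z| ^+ 2 = z * conjc z. Proof. exact: normCK. Qed.
Lemma mul_cj_ge0 (z : C) : 0 <= z * conjc z. Proof. exact: mul_conjC_ge0. Qed.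

Lemma unitpart (z : C) : exists u : C, u * conjc u = 1 /\ z = u * `|z|.
Proof.
have [->|hz] := eqVneq z 0.
  by exists 1; rewrite cj1 mulr1 normr0 mulr0.
have hn : `|z| != 0 by rewrite normr_eq0.
exists (z / `|z|); split; last by rewrite divfK.
rewrite cj_div cj_norm.
transitivity ((z * conjc z) / (`|z| * `|z|)); first by field.
by rewrite -normCK' expr2 divff // mulf_neq0.
Qed.

Lemma L2 (p q : C) : p * conjc p + q * conjc q = 1 -> exists (w e : C) (c s : R),
  [/\ w * conjc w = 1, e * conjc e = 1, 0 <= c /\ 0 <= s,
      c ^+ 2 + s ^+ 2 = 1 & w * p = e * c%:C /\ conjc w * q = e * s%:C].
Proof.
move=> hpq.
have [up [hup ep]] := unitpart p.
have [uq [huq eq]] := unitpart q.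
set w := sqrtC (uq * conjc up).
have hw2 : w ^+ 2 = uq * conjc up by rewrite sqrtCK.
have hw : w * conjc w = 1.
  apply/eqP; rewrite -sqrp_eq1; last exact: mul_cj_ge0.
  rewrite exprMn -cjX hw2 cjM conjcK.
  apply/eqP; transitivity ((uq * conjc uq) * (up * conjc up)); first by ring.
  by rewrite hup huq mulr1.
exists w, (w * up), (nc p), (nc q); split.
- exact: hw.
- transitivity ((w * conjc w) * (up * conjc up)); first by rewrite cjM; ring.
  by rewrite hw hup mulr1.
- by rewrite !normc_ge0.
- apply: complexI.
  by rewrite rcD !rcX -!normc_C !normCK' hpq.
split.
- by rewrite {1}ep normc_C mulrA.
- rewrite {1}eq normc_C mulrA; congr (_ * _).
  apply/esym; transitivity (w * (w * conjc w) * up); first by rewrite hw mulr1.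
  transitivity (w ^+ 2 * conjc w * up); first by ring.
  rewrite hw2.
  transitivity (conjc w * uq * (up * conjc up)); first by ring.
  by rewrite hup mulr1.
Qed.

Lemma L4 (c s : R) : 0 <= c -> 0 <= s -> c ^+ 2 + s ^+ 2 = 1 ->
  exists th : R, [/\ 0 <= th <= pi / 2, cos th = c & sin th = s].
Proof.
move=> hc hs h.
have hc1 : -1 <= c <= 1 by apply/andP; split; nra.
exists (acos c); split.
- apply/andP; split; first exact: acos_ge0.
  rewrite leNgt; apply/negP => hlt.
  have := hlt; rewrite -ltr_cos ?acosK ?cos_pihalf ?in_itv /= ?acos_ge0 ?acos_lepi //.
  + lra.
  + by rewrite divr_ge0 ?pi_ge0 // ler_pdivrMr // ler_peMr ?pi_ge0 // ler1n.
- by rewrite acosK // in_itv /=.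
- rewrite sin_acos //.
  have -> : 1 - c ^+ 2 = s ^+ 2 by lra.
  by rewrite sqrtr_sqr ger0_norm.
Qed.

Lemma L3 (e : C) : e * conjc e = 1 -> exists z : R, expi z = e.
Proof.
case: e => a b /= h.
have h2 : a ^+ 2 + b ^+ 2 = 1.
  move: h; simpc => /eqP; rewrite eq_complex /= => /andP [/eqP h _]; rewrite -h; ring.
have ha : -1 <= a <= 1 by apply/andP; split; nra.
have hsb : Num.sqrt (1 - a ^+ 2) = `|b|.
  have -> : 1 - a ^+ 2 = b ^+ 2 by lra.
  exact: sqrtr_sqr.
have [hb|hb] := leP 0 b.
  exists (acos a); rewrite /expi acosK ?in_itv //= sin_acos // hsb ger0_norm //.
exists (- acos a); rewrite /expi cosN sinN acosK ?in_itv //= sin_acos // hsb ltr0_norm //.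
by rewrite opprK.
Qed.

Definition mk2 (a b c d : C) : 'M[C]_2 :=
  \matrix_(i, j) if i == 0 then (if j == 0 then a else b) else (if j == 0 then c else d).

Lemma mk2_00 a b c d : mk2 a b c d 0 0 = a. Proof. by rewrite mxE. Qed.
Lemma mk2_01 a b c d : mk2 a b c d 0 1 = b. Proof. by rewrite mxE. Qed.
Lemma mk2_10 a b c d : mk2 a b c d 1 0 = c. Proof. by rewrite mxE. Qed.
Lemma mk2_11 a b c d : mk2 a b c d 1 1 = d. Proof. by rewrite mxE. Qed.
Definition mk2E := (mk2_00, mk2_01, mk2_10, mk2_11).

Lemma adj_mul m n p (A : 'M[C]_(m, n)) (B : 'M[C]_(n, p)) :
  adj (A *m B) = adj B *m adj A.
Proof. by rewrite /adj trmx_mul map_mxM. Qed.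

Lemma adjK m n (A : 'M[C]_(m, n)) : adj (adj A) = A.
Proof. by apply/matrixP => i j; rewrite !mxE conjCK. Qed.

Ltac mx2 := let i := fresh "i" in let j := fresh "j" in
  apply/matrixP; intros i j; case: (ord2P i) => ->; case: (ord2P j) => ->;
  rewrite !(mxE, sum2) /= ?conjE ?(cjD, cjB, cjN, cjM, conjcK, cj0, cj1).

Lemma unitU0 (x y : C) : x * conjc x + y * conjc y = 1 ->
  unitary (mk2 (conjc x) (conjc y) (-y) x).
Proof.
move=> h; rewrite /unitary; mx2; try (apply: (eq_trans _ h)); ring.
Qed.

Lemma core (N : 'M[C]_2) : N 1 1 = - N 0 0 ->
  N 0 0 * conjc (N 0 0) + N 0 1 * conjc (N 0 1)
   + N 1 0 * conjc (N 1 0) + N 1 1 * conjc (N 1 1) = 1 ->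
  exists (U : 'M[C]_2) (z th : R), [/\ unitary U, 0 <= th <= pi / 2,
     U *m N *m adj U = expi z *: mk2 0 (rc (cos th)) (rc (sin th)) 0 &
     expi z ^+ 2 * rc (cos th * sin th) = N 0 1 * N 1 0 - N 0 0 * N 1 1].
Proof.
move=> hN hF.
have [x [y [hxy hE]]] := L1 (N 0 0) (N 0 1) (N 1 0).
set U0 := mk2 (conjc x) (conjc y) (-y) x.
have hU0 := unitU0 hxy.
set P := U0 *m N *m adj U0.
have PE : forall i j, P i j = \sum_(k < 2) \sum_(l < 2) U0 i k * N k l * conjc (U0 j l).
  move=> i j; rewrite !(mxE, sum2) /= ?conjE; ring.
have hP00 : P 0 0 = 0.
  rewrite PE !sum2 !mxE /= !(cjD, cjB, cjN, cjM, conjcK) hN.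
  apply: (eq_trans _ hE); ring.
have hP11 : P 1 1 = 0.
  rewrite PE !sum2 !mxE /= !(cjD, cjB, cjN, cjM, conjcK) hN.
  have h := congr1 -%R hE; rewrite /= oppr0 in h.
  apply: (eq_trans _ h); ring.
have hfrob : P 0 1 * conjc (P 0 1) + P 1 0 * conjc (P 1 0) = 1.
  have key : P 0 0 * conjc (P 0 0) + P 0 1 * conjc (P 0 1) + P 1 0 * conjc (P 1 0) + P 1 1 * conjc (P 1 1)
     = (x * conjc x + y * conjc y) ^+ 2 * (N 0 0 * conjc (N 0 0) + N 0 1 * conjc (N 0 1)
   + N 1 0 * conjc (N 1 0) + N 1 1 * conjc (N 1 1)).
    rewrite !PE !sum2 !mxE /= !(cjD, cjB, cjN, cjM, conjcK); ring.
  move: key; rewrite hxy hF hP00 hP11 cj0 !mul0r add0r addr0 expr1n mulr1; exact.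
have hdet : P 0 1 * P 1 0 = N 0 1 * N 1 0 - N 0 0 * N 1 1.
  have key : P 0 1 * P 1 0 - P 0 0 * P 1 1 =
     (x * conjc x + y * conjc y) ^+ 2 * (N 0 1 * N 1 0 - N 0 0 * N 1 1).
    rewrite !PE !sum2 !mxE /= !(cjD, cjB, cjN, cjM, conjcK); ring.
  by move: key; rewrite hxy hP00 mul0r subr0 expr1n mul1r.
have [w [e [c [s [hw he [hc hs] hcs [hwp hwq]]]]]] := L2 hfrob.
have [th [hth hcos hsin]] := L4 hc hs hcs.
have [z hz] := L3 he.
set D := mk2 w 0 0 1.
have hD : unitary D.
  rewrite /unitary /D; mx2; rewrite ?hw; ring.
exists (D *m U0), z, th; split => //.
- by rewrite /unitary adj_mul mulmxA -[D *m U0 *m _]mulmxA hU0 mulmx1.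
- have -> : D *m U0 *m N *m adj (D *m U0) = D *m P *m adj D.
    by rewrite adj_mul /P !mulmxA.
  clearbody P.
  rewrite /D; mx2; rewrite hP00 ?hP11 /rc hz ?hcos ?hsin.
  + ring.
  + rewrite -hwp; ring.
  + rewrite -hwq; ring.
  + ring.
- rewrite hz /rc hcos hsin rcM -hdet.
  apply/esym; transitivity ((w * conjc w) * (P 0 1 * P 1 0)); first by rewrite hw mul1r.
  transitivity ((w * P 0 1) * (conjc w * P 1 0)); first by ring.
  rewrite hwp hwq; ring.
Qed.

Lemma adjZ m n (c : C) (A : 'M[C]_(m, n)) : adj (c *: A) = conjc c *: adj A.
Proof. by apply/matrixP => i j; rewrite !mxE conjE cjM. Qed.

Lemma adjD m n (A B : 'M[C]_(m, n)) : adj (A + B) = adj A + adj B.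
Proof. by apply/matrixP => i j; rewrite !mxE !conjE cjD. Qed.

Lemma adj_tr m n (A : 'M[C]_(m, n)) : adj (A^T) = (adj A)^T.
Proof. by apply/matrixP => i j; rewrite !mxE. Qed.

Lemma proj_conj m (W : 'M[C]_m) n (v : 'M[C]_(m, n)) : W *m proj v *m adj W = proj (W *m v).
Proof. by rewrite /proj adj_mul !mulmxA. Qed.

Lemma projZ m n (c : C) (v : 'M[C]_(m, n)) : c * conjc c = 1 -> proj (c *: v) = proj v.
Proof. by move=> h; rewrite /proj adjZ -scalemxAl -scalemxAr scalerA h scale1r. Qed.

Lemma conj_mix m (W : 'M[C]_m) (a b : C) (P Q : 'M[C]_m) :
  W *m (a *: P + b *: Q) *m adj W = a *: (W *m P *m adj W) + b *: (W *m Q *m adj W).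
Proof. by rewrite mulmxDr mulmxDl -!scalemxAr -!scalemxAl. Qed.

Lemma expi_unit (x : R) : expi x * conjc (expi x) = 1.
Proof.
rewrite /expi /=; simpc; apply/eqP; rewrite eq_complex /= cos2Dsin2 eqxx /=.
by apply/eqP; ring.
Qed.

Ltac vec4 := let k := fresh "k" in let l := fresh "l" in
  let i := fresh "i" in let j := fresh "j" in
  rewrite ?ket2_vec; apply/matrixP; intros k l; case: (mxtens_indexP k) => i j;
  rewrite /vec !mxE !mxtens_indexK /=; case: (ord2P i) => ->; case: (ord2P j) => ->;
  rewrite ?(mxE, sum2) /=.

Lemma normr_expi (x : R) : `|expi x| = 1.
Proof.
apply/eqP; rewrite -sqrp_eq1 ?normr_ge0 // normCK' expi_unit //.
Qed.

Lemma expi2 (x : R) : expi (2 * x) = expi x ^+ 2.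
Proof.
have -> : 2 * x = x + x by ring.
rewrite /expi sinD cosD expr2; simpc.
apply/eqP; rewrite eq_complex /=; apply/andP; split; apply/eqP; ring.
Qed.

End Aux.

Ltac mx2 := let i := fresh "i" in let j := fresh "j" in
  apply/matrixP; intros i j; case: (ord2P i) => ->; case: (ord2P j) => ->;
  rewrite !(mxE, sum2) /= ?conjE ?(cjD, cjB, cjN, cjM, conjcK, cj0, cj1).

Ltac vec4 := let k := fresh "k" in let l := fresh "l" in
  let i := fresh "i" in let j := fresh "j" in
  rewrite ?ket2_vec; apply/matrixP; intros k l; case: (mxtens_indexP k) => i j;
  rewrite /vec !mxE !mxtens_indexK /=; case: (ord2P i) => ->; case: (ord2P j) => ->;
  rewrite ?(mxE, sum2) /=.

Theorem mainTheorem2 (R : realType) (phi alpha beta : R)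
  (hphi : 0 <= phi <= pi / 2) (halpha : 0 <= alpha <= pi / 2)
  (hbeta : 0 <= beta <= 2 * pi) :
  let s2 := rc (Num.sqrt (2 : R)) in
  let psi1 : 'M[R[i]]_(2 * 2, 1 * 1) :=
    s2^-1 *: (ket2 R 0 0 + ket2 R 1 1) in
  let psi2 : 'M[R[i]]_(2 * 2, 1 * 1) :=
    rc (cos phi) *: (rc (cos alpha) *: ket2 R 0 1 + rc (sin alpha) *: ket2 R 1 0)
    + (expi beta * rc (sin phi) / s2) *: (ket2 R 0 0 - ket2 R 1 1) in
  exists (Va Vb : 'M[R[i]]_2) (zeta theta' : R),
    [/\ unitary Va /\ unitary Vb, 0 <= theta' <= pi / 2,
      rc (sin (2 * theta')) =
        Num.norm (expi (2 * beta) * rc (sin phi ^+ 2)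
           + rc (cos phi ^+ 2 * sin (2 * alpha))),
      (Va *t Vb) *m psi1 = s2^-1 *: (ket2 R 0 1 + ket2 R 1 0) /\
      (Va *t Vb) *m psi2 =
        expi zeta *: (rc (cos theta') *: ket2 R 0 0 + rc (sin theta') *: ket2 R 1 1)
    & forall nu1 nu2 : R, 0 <= nu1 <= 1 -> 0 <= nu2 <= 1 -> nu1 + nu2 = 1 ->
        LU_equiv (rc nu1 *: proj psi1 + rc nu2 *: proj psi2)
          (rc nu2 *: proj (rc (cos theta') *: ket2 R 0 0 + rc (sin theta') *: ket2 R 1 1)
           + rc nu1 *: proj (s2^-1 *: (ket2 R 0 1 + ket2 R 1 0)))].
Proof.
move=> s2 psi1 psi2.
set b := expi beta * rc (sin phi) / s2.
set M := mk2 b (rc (cos phi) * rc (cos alpha)) (rc (cos phi) * rc (sin alpha)) (- b).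
have hs2pos : 0 < Num.sqrt (2 : R) by rewrite sqrtr_gt0.
have hs20 : s2 != 0 by rewrite /s2 /rc rc_neq0 // gt_eqF.
have hs2 : s2 ^+ 2 = 2%:R by rewrite /s2 /rc -rcX sqr_sqrtr ?ler0n // (rc_nat _ 2).
have hcs2 : conjc s2 = s2 by rewrite /s2 /rc conjc_real.
have hbb : b * conjc b = rc (sin phi ^+ 2) / 2%:R.
  rewrite /b cj_div !cjM /rc conjc_real hcs2.
  transitivity ((expi beta * conjc (expi beta)) * (sin phi)%:C ^+ 2 / s2 ^+ 2); first by field.
  by rewrite expi_unit hs2 mul1r rcX.
have hb2 : b * b = expi beta ^+ 2 * rc (sin phi) ^+ 2 / 2%:R.
  by rewrite /b -hs2; field; exact: hs20.
have hpsi1 : psi1 = vec (s2^-1 *: 1%:M) by rewrite /psi1; vec4; ring.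
have hpsi2 : psi2 = vec M by rewrite /psi2 /M /b; vec4; ring.
clearbody b.
have hc2 : forall x : R, rc (cos x) ^+ 2 + rc (sin x) ^+ 2 = 1.
  by move=> x; rewrite /rc -!rcX -rcD cos2Dsin2 rc1.
have hM11 : M 1 1 = - M 0 0 by rewrite /M !mk2E.
have hMF : M 0 0 * conjc (M 0 0) + M 0 1 * conjc (M 0 1)
   + M 1 0 * conjc (M 1 0) + M 1 1 * conjc (M 1 1) = 1.
  rewrite /M !mk2E cjN mulrNN hbb !cjM /rc !conjc_real rcX.
  transitivity ((sin phi)%:C ^+ 2 + (cos phi)%:C ^+ 2 * ((cos alpha)%:C ^+ 2 + (sin alpha)%:C ^+ 2)).
    by field.
  by have := hc2 alpha; rewrite /rc => ->; rewrite mulr1 addrC; have := hc2 phi; rewrite /rc => ->.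
have [U [z [th [hU hth hUM hdet]]]] := core hM11 hMF.
pose Xm : 'M[R[i]]_2 := mk2 0 1 1 0.
have hX : unitary Xm by rewrite /unitary /Xm; mx2; ring.
set Vb := Xm *m (adj U)^T.
have hVb : unitary Vb.
  rewrite /unitary /Vb adj_mul adj_tr adjK mulmxA -[Xm *m _ *m U^T]mulmxA -trmx_mul hU trmx1.
  by rewrite mulmx1 hX.
have hVbT : Vb^T = adj U *m Xm^T by rewrite /Vb trmx_mul trmxK.
have e1 : (U *t Vb) *m psi1 = s2^-1 *: (ket2 R 0 1 + ket2 R 1 0).
  rewrite hpsi1 tens_vec hVbT -scalemxAr mulmx1 -scalemxAl mulmxA hU mul1mx.
  by apply/esym; rewrite /Xm; vec4; ring.
have e2 : (U *t Vb) *m psi2 =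
    expi z *: (rc (cos th) *: ket2 R 0 0 + rc (sin th) *: ket2 R 1 1).
  rewrite hpsi2 tens_vec hVbT mulmxA hUM.
  by apply/esym; rewrite /Xm; vec4; ring.
exists U, Vb, z, th; split.
- by split.
- exact: hth.
- have hc : 0 <= cos th.
    apply: cos_ge0_pihalf; move/andP: hth => [h1 h2]; apply/andP; split => //.
    have := pi_ge0 R; lra.
  have hs : 0 <= sin th.
    apply: sin_ge0_pi; move/andP: hth => [h1 h2]; apply/andP; split => //.
    have := pi_ge0 R; lra.
  have hW : expi (2 * beta) * rc (sin phi ^+ 2) + rc (cos phi ^+ 2 * sin (2 * alpha))
      = 2%:R * (expi z ^+ 2 * rc (cos th * sin th)).
    rewrite hdet /M !mk2E mulrN opprK hb2 expi2.
    have -> : 2 * alpha = alpha + alpha by ring.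
    by rewrite sinD /rc !rcX !rcM !rcD !rcM; field.
  rewrite hW normrM normrM normrX normr_expi expr1n mul1r normr_nat.
  rewrite ger0_norm; last by rewrite /rc ler0c mulr_ge0.
  have -> : 2 * th = th + th by ring.
  by rewrite sinD /rc !rcD !rcM; ring.
- by split.
- move=> nu1 nu2 _ _ _; exists U, Vb; split => //; split => //.
  rewrite conj_mix !proj_conj e1 e2 projZ ?expi_unit //.
  by rewrite addrC.
Qed.
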